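(* Let $T$ be a tree on $n\ge 2$ vertices. Then ${\rm mvr}(\overline{T})=2$ if $T=K_{1,n-1}$ (a star), and ${\rm mvr}(\overline{T})=3$ otherwise.
   Context: All graphs are finite and simple; $\overline{G}$ denotes the complement of $G$. An orthogonal vector representation of a graph $G=(V,E)$ in $\mathbb{R}^d$ is a map $\phi:V\to\mathbb{R}^d$ with $\phi(v)\neq 0$ for all $v$, and for distinct $u,v$: $\langle\phi(u),\phi(v)\rangle=0$ if and only if $uv\notin E$. ${\rm mvr}(G)$ is the smallest $d$ for which such a representation exists. *)

(* Defs.v *)
From HB Require Import structures.
From mathcomp Require Import all_boot all_order all_algebra.
From mathcomp Require Import Rstruct.
From Stdlib Require Rdefinitions.
Set Implicit Arguments. Unset Strict Implicit. Unset Printing Implicit Defensive.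
Import Order.TTheory GRing.Theory Num.Theory.
Local Open Scope ring_scope.

Definition simple_graph (V : finType) (e : rel V) : Prop :=
  symmetric e /\ irreflexive e.

Definition compl (V : finType) (e : rel V) : rel V :=
  [rel x y | (x != y) && ~~ e x y].

Definition connected_graph (V : finType) (e : rel V) : Prop :=
  forall x y : V, connect e x y.
Definition acyclic_graph (V : finType) (e : rel V) : Prop :=
  forall c : seq V, (3 <= size c)%nat -> ~~ ucycleb e c.
Definition is_tree (V : finType) (e : rel V) : Prop :=
  connected_graph e /\ acyclic_graph e.

(* G is (isomorphic to) the star K_{1,|V|-1}: some centre c such that
   the edges are exactly the pairs {c, v} with v <> c. *)
Definition is_star (V : finType) (e : rel V) : Prop :=
  exists c : V, forall u v : V, e u v = (u != v) && ((u == c) || (v == c)).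

Definition dotR (d : nat) (x y : 'rV[Rdefinitions.R]_d) : Rdefinitions.R := \sum_(i < d) x 0 i * y 0 i.

Definition orth_rep (V : finType) (e : rel V) (d : nat) (phi : V -> 'rV[Rdefinitions.R]_d)
  : Prop :=
  (forall v, phi v != 0) /\
  (forall u v, u != v -> (dotR (phi u) (phi v) == 0) = ~~ e u v).

Definition has_orth_rep (V : finType) (e : rel V) (d : nat) : Prop :=
  exists phi : V -> 'rV[Rdefinitions.R]_d, orth_rep e phi.

Definition mvr_eq (V : finType) (e : rel V) (k : nat) : Prop :=
  has_orth_rep e k /\ (forall d, has_orth_rep e d -> (k <= d)%N).

(* Main.v *)
From Stdlib Require Import Reals Lra Psatz List Classical.
Open Scope R_scope.

Record vec3 := V3 { c1 : R; c2 : R; c3 : R }.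
Definition dot x y := c1 x * c1 y + c2 x * c2 y + c3 x * c3 y.
Definition cross x y := V3 (c2 x * c3 y - c3 x * c2 y) (c3 x * c1 y - c1 x * c3 y)
   (c1 x * c2 y - c2 x * c1 y).
Definition nrm x := dot x x.
Definition nz x := nrm x <> 0.

Lemma nrm_ge0 x : 0 <= nrm x.
Proof. unfold nrm, dot; nra. Qed.
Lemma nrm0 x : nrm x = 0 -> c1 x = 0 /\ c2 x = 0 /\ c3 x = 0.
Proof. unfold nrm, dot; intros; repeat split; nra. Qed.
Lemma nrm0' x : c1 x = 0 -> c2 x = 0 -> c3 x = 0 -> nrm x = 0.
Proof. unfold nrm, dot; intros -> -> ->; ring. Qed.
Lemma lag3 x y : nrm (cross x y) = nrm x * nrm y - (dot x y)^2.
Proof. unfold nrm, dot, cross; simpl; ring. Qed.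
Lemma dot_comm x y : dot x y = dot y x.
Proof. unfold dot; ring. Qed.
Lemma cross_anti x y : nrm (cross x y) = nrm (cross y x).
Proof. unfold nrm, dot, cross; simpl; ring. Qed.
Lemma nz_mul x y : nz x -> nz y -> nrm x * nrm y <> 0.
Proof. unfold nz; intros; apply Rmult_integral_contrapositive; auto. Qed.

Lemma lag_perp x y : dot x y = 0 -> nz x -> nz y -> nz (cross x y).
Proof. intros H Hx Hy; unfold nz; rewrite lag3, H.
replace (nrm x * nrm y - 0 ^ 2) with (nrm x * nrm y) by ring. apply nz_mul; auto. Qed.

Lemma lin_root p q t1 t2 : p + t1 * q = 0 -> p + t2 * q = 0 -> t1 <> t2 -> q = 0 /\ p = 0.
Proof.
intros H1 H2 Ht.
assert (H : (t1 - t2) * q = 0) by lra.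
apply Rmult_integral in H; destruct H as [H|H]; [exfalso; apply Ht; lra|].
split; [exact H| subst; lra].
Qed.

Lemma deg_dot a d w : nz a -> nz (cross a d) ->
  dot (cross a d) w = 0 -> dot (cross a (cross a d)) w = 0 -> nrm (cross w a) = 0.
Proof.
intros Ha Hb H1 H2.
set (b := cross a d) in *. set (c := cross a b) in *. set (z := cross w a).
assert (Hab : dot a b = 0) by (unfold b, dot, cross; simpl; ring).
assert (Hc : nrm c = nrm a * nrm b) by (unfold c; rewrite lag3, Hab; ring).
assert (Hc0 : nrm c <> 0) by (rewrite Hc; apply nz_mul; auto).
assert (Hza : dot z a = 0) by (unfold z, dot, cross; simpl; ring).
assert (Hzb : dot z b = 0) by (rewrite <- H2; unfold z, c, dot, cross; simpl; ring).
assert (Hzc : dot z c = dot w a * dot a b - nrm a * dot w b)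
  by (unfold z, c, nrm, dot, cross; simpl; ring).
rewrite Hab, (dot_comm w b), H1 in Hzc.
assert (Hid : forall k, k = 1%nat \/ k = 2%nat \/ k = 3%nat ->
   nrm c * (match k with 1%nat => c1 z | 2%nat => c2 z | _ => c3 z end) =
   dot z a * (match k with 1%nat => c1 (cross b c) | 2%nat => c2 (cross b c) | _ => c3 (cross b c) end)
   + dot z b * (match k with 1%nat => c1 (cross c a) | 2%nat => c2 (cross c a) | _ => c3 (cross c a) end)
   + dot z c * (match k with 1%nat => c1 c | 2%nat => c2 c | _ => c3 c end)).
{ intros k [ -> | [ -> | -> ] ]; unfold c, nrm, dot, cross; simpl; ring. }
assert (Hk : forall k, k = 1%nat \/ k = 2%nat \/ k = 3%nat ->
  (match k with 1%nat => c1 z | 2%nat => c2 z | _ => c3 z end) = 0).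
{ intros k Hk'. specialize (Hid k Hk'). rewrite Hza, Hzb, Hzc in Hid.
  assert (E : nrm c * (match k with 1%nat => c1 z | 2%nat => c2 z | _ => c3 z end) = 0) by lra.
  apply Rmult_integral in E; destruct E; [contradiction|assumption]. }
apply nrm0'; [apply (Hk 1%nat)|apply (Hk 2%nat)|apply (Hk 3%nat)]; auto.
Qed.

Lemma deg_cross b c w : nz b -> nz c -> nz w -> dot b c = 0 ->
  nrm (cross b w) = 0 -> nrm (cross c w) = 0 -> False.
Proof.
intros Hb Hc Hw Hbc H1 H2.
assert (E : dot (cross b w) (cross c w) = dot b c * nrm w - dot b w * dot c w)
  by (unfold nrm, dot, cross; simpl; ring).
destruct (nrm0 _ H1) as [x1 [x2 x3]].
assert (E0 : dot (cross b w) (cross c w) = 0) by (unfold dot; rewrite x1, x2, x3; ring).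
rewrite E0, Hbc in E.
assert (E2 : dot b w * dot c w = 0) by lra.
rewrite lag3 in H1, H2.
apply Rmult_integral in E2; destruct E2 as [E2|E2].
- rewrite E2 in H1. apply (nz_mul _ _ Hb Hw). lra.
- rewrite E2 in H2. apply (nz_mul _ _ Hc Hw). lra.
Qed.

Lemma avoid_gen (L : list (R -> Prop)) :
  (forall P, In P L -> forall t1 t2, P t1 -> P t2 -> t1 = t2) ->
  forall ts : list R, NoDup ts -> (length L < length ts)%nat ->
  exists t, In t ts /\ forall P, In P L -> ~ P t.
Proof.
induction L as [|P L IH]; intros HL ts Hnd Hlen.
- destruct ts as [|t ts]; simpl in Hlen; [lia|].
  exists t; split; [left; reflexivity| intros P []].
- assert (HL' : forall Q, In Q L -> forall t1 t2, Q t1 -> Q t2 -> t1 = t2)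
    by (intros; eapply HL; eauto; right; auto).
  destruct (classic (exists t0, In t0 ts /\ P t0)) as [[t0 [Ht0 HP0]]|Hn].
  + destruct (in_split _ _ Ht0) as [l1 [l2 E]]. subst ts.
    assert (Hnd' : NoDup (l1 ++ l2)) by (eapply NoDup_remove_1; eauto).
    assert (Hn0 : ~ In t0 (l1 ++ l2)) by (eapply NoDup_remove_2; eauto).
    rewrite length_app in Hlen; simpl in Hlen.
    destruct (IH HL' (l1 ++ l2) Hnd') as [t [Ht Hgood]].
    { rewrite length_app; simpl in *; lia. }
    exists t; split.
    * apply in_app_or in Ht; apply in_or_app; destruct Ht; [left|right; right]; auto.
    * intros Q [<-|HQ] HQt; [|eapply Hgood; eauto].
      assert (t = t0) by (eapply HL; [left; reflexivity| exact HQt| exact HP0]).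
      subst; contradiction.
  + destruct (IH HL' ts Hnd) as [t [Ht Hgood]]; [simpl in Hlen; lia|].
    exists t; split; auto.
    intros Q [<-|HQ] HQt; [apply Hn; eauto| eapply Hgood; eauto].
Qed.

Fixpoint cands (n : nat) : list R :=
  match n with O => nil | S m => INR m :: cands m end.
Lemma cands_len n : length (cands n) = n.
Proof. induction n; simpl; auto. Qed.
Lemma cands_in n x : In x (cands n) -> exists m, (m < n)%nat /\ x = INR m.
Proof. induction n; simpl; [tauto|]. intros [<-|H]; [exists n; split; auto|].
destruct (IHn H) as [m [? ?]]; exists m; split; auto. Qed.
Lemma cands_nodup n : NoDup (cands n).
Proof. induction n; simpl; constructor; auto.
intros H; destruct (cands_in _ _ H) as [m [Hm E]]; apply INR_eq in E; lia. Qed.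

Lemma avoid (L : list (R -> Prop)) :
  (forall P, In P L -> forall t1 t2, P t1 -> P t2 -> t1 = t2) ->
  exists t, forall P, In P L -> ~ P t.
Proof.
intros HL. destruct (avoid_gen L HL (cands (S (length L)))) as [t [_ H]].
- apply cands_nodup.
- rewrite cands_len; lia.
- exists t; exact H.
Qed.

Fixpoint consA (W : list vec3) : list (R -> Prop) :=
  match W with nil => nil
  | w :: W' => (fun t => nrm (cross (V3 1 t 0) w) = 0) :: consA W' end.

Lemma consA_in W P : In P (consA W) -> exists w, In w W /\ P = (fun t => nrm (cross (V3 1 t 0) w) = 0).
Proof.
induction W as [|w W IH]; simpl; [tauto|]. intros [<-|H]; [exists w; auto|].
destruct (IH H) as [w' [? ?]]; exists w'; auto.
Qed.

Lemma lemA (W : list vec3) : (forall w, In w W -> nz w) ->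
  exists a, nz a /\ forall w, In w W -> nz (cross a w).
Proof.
intros HW. destruct (avoid (consA W)) as [t Ht].
- intros P HP t1 t2 H1 H2. destruct (consA_in _ _ HP) as [w [Hw ->]].
  destruct (Req_dec t1 t2) as [|Hne]; [assumption|exfalso].
  apply (HW w Hw).
  destruct (nrm0 _ H1) as [a1 [a2 a3]]. destruct (nrm0 _ H2) as [b1 [b2 b3]].
  simpl in *.
  assert (w3 : c3 w = 0) by lra.
  assert (w1w2 : c2 w - t1 * c1 w = 0 /\ c2 w - t2 * c1 w = 0) by lra.
  destruct (lin_root (c2 w) (- c1 w) t1 t2) as [q p]; try lra.
  apply nrm0'; lra.
- exists (V3 1 t 0); split.
  + unfold nz, nrm, dot; simpl; nra.
  + intros w Hw H. apply (Ht (fun t => nrm (cross (V3 1 t 0) w) = 0)); auto.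
    clear -Hw. induction W as [|w' W IH]; simpl in *; [tauto|].
    destruct Hw as [<-|Hw]; [left; reflexivity| right; auto].
Qed.

Lemma eq0_by (x y : R) : x = y -> y = 0 -> x = 0.
Proof. intros -> ->; reflexivity. Qed.

Definition vlin b c t := V3 (c1 b + t * c1 c) (c2 b + t * c2 c) (c3 b + t * c3 c).

Fixpoint cons2 (f : R -> vec3) (W : list vec3) : list (R -> Prop) :=
  match W with nil => nil
  | w :: W' => (fun t => dot (f t) w = 0) :: (fun t => nrm (cross (f t) w) = 0) :: cons2 f W' end.

Lemma cons2_in f W P : In P (cons2 f W) -> exists w, In w W /\
  (P = (fun t => dot (f t) w = 0) \/ P = (fun t => nrm (cross (f t) w) = 0)).
Proof.
induction W as [|w W IH]; simpl; [tauto|]. intros [<-|[<-|H]]; [exists w; auto|exists w; auto|].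
destruct (IH H) as [w' [? ?]]; exists w'; auto.
Qed.

Lemma in_cons2 f W w : In w W -> In (fun t => dot (f t) w = 0) (cons2 f W) /\
   In (fun t => nrm (cross (f t) w) = 0) (cons2 f W).
Proof.
induction W as [|w' W IH]; simpl; [tauto|].
intros [<-|H]; [split; auto|]. destruct (IH H); split; right; right; auto.
Qed.

Lemma core (a : vec3) (W : list vec3) : nz a ->
  (forall w, In w W -> nz w /\ nz (cross w a)) ->
  exists x, nz x /\ dot x a = 0 /\ forall w, In w W -> dot x w <> 0 /\ nz (cross x w).
Proof.
intros Ha HW.
destruct (lemA (a :: nil)) as [d [_ Hd]]; [intros w [<-|[]]; auto|].
specialize (Hd a (or_introl eq_refl)).
assert (Hb : nz (cross a d)) by (unfold nz; rewrite cross_anti; exact Hd).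
set (b := cross a d) in *. set (c := cross a b).
assert (Hab : dot a b = 0) by (unfold b, dot, cross; simpl; ring).
assert (Hbc : dot b c = 0) by (unfold c, dot, cross; simpl; ring).
assert (Hac : dot a c = 0) by (unfold c, dot, cross; simpl; ring).
assert (Hc : nz c).
{ unfold nz, c; rewrite lag3, Hab. replace (nrm a * nrm b - 0 ^ 2) with (nrm a * nrm b) by ring.
  apply nz_mul; auto. }
assert (Eb : b = cross a d) by reflexivity. assert (Ec : c = cross a b) by reflexivity.
clearbody c. clearbody b.
set (f := vlin b c).
destruct (avoid ((fun t => nrm (f t) = 0) :: cons2 f W)) as [t Ht].
- intros P [<-|HP] t1 t2 H1 H2;
  (destruct (Req_dec t1 t2) as [|Hne]; [assumption|exfalso]).
  + destruct (nrm0 _ H1) as [a1 [a2 a3]]. destruct (nrm0 _ H2) as [b1 [b2 b3]].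
    unfold f, vlin in *; simpl in *.
    destruct (lin_root _ _ _ _ a1 b1 Hne). destruct (lin_root _ _ _ _ a2 b2 Hne).
    destruct (lin_root _ _ _ _ a3 b3 Hne).
    apply Hc; apply nrm0'; auto.
  + destruct (cons2_in _ _ _ HP) as [w [Hw [-> | ->]]]; destruct (HW w Hw) as [Hw0 Hwa].
    * assert (E : forall t, dot (f t) w = dot b w + t * dot c w)
        by (intros; unfold f, vlin, dot; simpl; ring).
      rewrite E in H1, H2. destruct (lin_root _ _ _ _ H1 H2 Hne) as [q p].
      apply Hwa. apply (deg_dot a d w); [exact Ha|rewrite <- Eb; exact Hb| |].
      rewrite <- Eb; exact p.
      rewrite <- Eb, <- Ec; exact q.
    * destruct (nrm0 _ H1) as [a1 [a2 a3]]. destruct (nrm0 _ H2) as [b1 [b2 b3]].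
      unfold f, vlin, cross in *; simpl in *.
      assert (r1 := lin_root (c2 b * c3 w - c3 b * c2 w) (c2 c * c3 w - c3 c * c2 w) t1 t2
        ltac:(eapply eq0_by; [|exact a1]; ring) ltac:(eapply eq0_by; [|exact b1]; ring) Hne).
      assert (r2 := lin_root (c3 b * c1 w - c1 b * c3 w) (c3 c * c1 w - c1 c * c3 w) t1 t2
        ltac:(eapply eq0_by; [|exact a2]; ring) ltac:(eapply eq0_by; [|exact b2]; ring) Hne).
      assert (r3 := lin_root (c1 b * c2 w - c2 b * c1 w) (c1 c * c2 w - c2 c * c1 w) t1 t2
        ltac:(eapply eq0_by; [|exact a3]; ring) ltac:(eapply eq0_by; [|exact b3]; ring) Hne).
      destruct r1, r2, r3.
      apply (deg_cross b c w); auto; apply nrm0'; simpl; auto.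
- exists (f t); split; [|split].
  + intros H; apply (Ht (fun t => nrm (f t) = 0)); [left; reflexivity| exact H].
  + unfold f, vlin, dot; simpl.
    replace (c1 b + t * c1 c) with (c1 b + t * c1 c) by reflexivity.
    transitivity (dot b a + t * dot c a); [unfold dot; ring|].
    rewrite (dot_comm b a), (dot_comm c a), Hab, Hac; ring.
  + intros w Hw. destruct (in_cons2 f W w Hw) as [I1 I2]. split.
    * intros H; apply (Ht _ (or_intror I1)); exact H.
    * intros H; apply (Ht _ (or_intror I2)); exact H.
Qed.

Record vec2 := V2 { d1 : R; d2 : R }.
Definition dot2 x y := d1 x * d1 y + d2 x * d2 y.
Definition nz2 x := dot2 x x <> 0.
Lemma dot2_comm x y : dot2 x y = dot2 y x.
Proof. unfold dot2; ring. Qed.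
Lemma nz2_comp x : nz2 x -> d1 x <> 0 \/ d2 x <> 0.
Proof. unfold nz2, dot2; intros H. destruct (Req_dec (d1 x) 0) as [E|E]; [right|left; auto].
intros E2; apply H; rewrite E, E2; ring. Qed.
Lemma nz2_of x : ~ (d1 x = 0 /\ d2 x = 0) -> nz2 x.
Proof. unfold nz2, dot2; intros H E; apply H; split; nra. Qed.

Lemma L2 z x y t : nz2 z -> nz2 x -> dot2 z x = 0 -> dot2 z y = 0 -> dot2 x t = 0 -> dot2 y t = 0.
Proof.
intros Hz Hx H1 H2 H3.
set (D := d1 x * d2 y - d2 x * d1 y).
assert (E1 : d1 z * D = d2 y * dot2 z x - d2 x * dot2 z y) by (unfold D, dot2; ring).
assert (E2 : d2 z * D = - d1 y * dot2 z x + d1 x * dot2 z y) by (unfold D, dot2; ring).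
rewrite H1, H2 in E1, E2.
assert (HD : D = 0).
{ destruct (nz2_comp z Hz) as [Hc|Hc].
  - assert (E : d1 z * D = 0) by lra. apply Rmult_integral in E; tauto.
  - assert (E : d2 z * D = 0) by lra. apply Rmult_integral in E; tauto. }
assert (F1 : d1 x * dot2 y t = d1 y * dot2 x t + d2 t * D) by (unfold D, dot2; ring).
assert (F2 : d2 x * dot2 y t = d2 y * dot2 x t - d1 t * D) by (unfold D, dot2; ring).
rewrite H3, HD in F1, F2.
destruct (nz2_comp x Hx) as [Hc|Hc].
- assert (E : d1 x * dot2 y t = 0) by lra. apply Rmult_integral in E; tauto.
- assert (E : d2 x * dot2 y t = 0) by lra. apply Rmult_integral in E; tauto.
Qed.

Require Import Defs.
From HB Require Import structures.
From mathcomp Require Import all_boot all_order all_algebra.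
From mathcomp Require Import Rstruct.
From Stdlib Require Import Classical Lia.
From mathcomp Require Import zify.
Set Implicit Arguments. Unset Strict Implicit. Unset Printing Implicit Defensive.

Lemma index_first (V : finType) (e : rel V) : simple_graph e -> acyclic_graph e ->
  forall x p y, path e x p -> uniq (x :: p) -> y \in p -> e x y -> index y p = 0%N.
Proof.
move=> [Hsym Hirr] Hac x p y Hp Hu Hy Hxy.
case Ej: (index y p) => [//|j].
have Hjs : (j.+1 < size p)%N by rewrite -Ej index_mem.
exfalso.
have := Hac (x :: take j.+2 p).
rewrite /= (size_takel Hjs) => /(_ isT) /negP; apply.
rewrite /ucycleb /=.
apply/andP; split.
- rewrite rcons_path; apply/andP; split.
  + move: Hp; rewrite -{1}(cat_take_drop j.+2 p) cat_path => /andP[] //.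
  + rewrite -nth_last (size_takel Hjs) /= nth_take //.
    by rewrite -Ej nth_index // Hsym.
- move: Hu => /= /andP[Hx Hu]; rewrite take_uniq // andbT.
  by apply: contra Hx; apply: mem_take.
Qed.

Lemma leaf_exists (V : finType) (e : rel V) : simple_graph e -> acyclic_graph e ->
  forall S : {set V}, S != set0 ->
  exists2 v, v \in S & forall y z, y \in S -> z \in S -> e v y -> e v z -> y = z.
Proof.
move=> He Hac S HS.
have [Hsym Hirr] := He.
suff main : forall k x p, (#|V| - size (x :: p))%N = k -> x \in S -> path e x p ->
    uniq (x :: p) ->
    exists2 v, v \in S & forall y z, y \in S -> z \in S -> e v y -> e v z -> y = z.
  have [x Hx] : exists x, x \in S.
    by case: (set_0Vmem S) => [E|[x Hx]]; [rewrite E eqxx in HS|exists x].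
  by apply: (main _ x [::] erefl Hx).
elim=> [|k IH] x p Hk Hx Hp Hu;
  (case: (classic (exists y, [/\ y \in S, e x y & y \notin x :: p])) =>
      [[y [HyS Hxy Hyn]]|Hno]).
- exfalso.
  have Hu' : uniq (y :: x :: p) by apply/andP; split.
  have := max_card (mem (y :: x :: p)).
  rewrite (card_uniqP Hu') /=.
  move: Hk; rewrite /=. lia.
- exists x => // y z Hy Hz Hxy Hxz.
  have Hin : forall w, w \in S -> e x w -> w \in p.
    move=> w Hw Hxw.
    have Hwin : w \in x :: p.
      apply/negPn/negP => Hn; apply: Hno; by exists w.
    move: Hwin; rewrite inE => /orP[/eqP Ew|//].
    by rewrite Ew Hirr in Hxw.
  have Iy := index_first He Hac Hp Hu (Hin _ Hy Hxy) Hxy.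
  have Iz := index_first He Hac Hp Hu (Hin _ Hz Hxz) Hxz.
  by rewrite -(nth_index x (Hin _ Hy Hxy)) -(nth_index x (Hin _ Hz Hxz)) Iy Iz.
- apply: (IH y (x :: p)) => //.
  + move: Hk => /=.
    have Hu' : uniq (y :: x :: p) by apply/andP; split.
    have := max_card (mem (y :: x :: p)).
    rewrite (card_uniqP Hu') /=. lia.
  + by rewrite /= Hp andbT Hsym.
  + by apply/andP; split.
- exists x => // y z Hy Hz Hxy Hxz.
  have Hin : forall w, w \in S -> e x w -> w \in p.
    move=> w Hw Hxw.
    have Hwin : w \in x :: p.
      apply/negPn/negP => Hn; apply: Hno; by exists w.
    move: Hwin; rewrite inE => /orP[/eqP Ew|//].
    by rewrite Ew Hirr in Hxw.
  have Iy := index_first He Hac Hp Hu (Hin _ Hy Hxy) Hxy.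
  have Iz := index_first He Hac Hp Hu (Hin _ Hz Hxz) Hxz.
  by rewrite -(nth_index x (Hin _ Hy Hxy)) -(nth_index x (Hin _ Hz Hxz)) Iy Iz.
Qed.

Definition Inv (V : finType) (e : rel V) (S : {set V}) (phi : V -> vec3) :=
  (forall v, v \in S -> nz (phi v)) /\
  (forall u w, u \in S -> w \in S -> u != w ->
     nz (cross (phi u) (phi w)) /\ (dot (phi u) (phi w) = 0%R <-> e u w)).

Lemma In_mem (T : eqType) (s : seq T) x : In x s <-> x \in s.
Proof.
elim: s => [|y s IH] /=; first by split.
rewrite inE; split.
- by case=> [->|/IH ->]; rewrite ?eqxx ?orbT.
- by case/orP=> [/eqP ->|/IH]; [left|right].
Qed.

Lemma In_map_enum (V : finType) (phi : V -> vec3) (A : {set V}) w :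
  In w (List.map phi (enum A)) <-> exists x, x \in A /\ w = phi x.
Proof.
rewrite in_map_iff; split.
- by move=> [x [<- /In_mem]]; rewrite mem_enum => Hx; exists x.
- by move=> [x [Hx ->]]; exists x; split => //; apply/In_mem; rewrite mem_enum.
Qed.

Lemma extend (V : finType) (e : rel V) (S : {set V}) (v : V) (phi : V -> vec3) (x : vec3) : simple_graph e -> v \notin S ->
  Inv e S phi -> nz x ->
  (forall z, z \in S -> nz (cross x (phi z)) /\ (dot x (phi z) = 0%R <-> e v z)) ->
  Inv e (v |: S) (fun y => if y == v then x else phi y).
Proof.
move=> [Hsym Hirr] HvS [I1 I2] Hx Hz; split.
- move=> y; rewrite in_setU1; case: eqP => [_ _|Hyv /= Hy]; first exact: Hx.
  exact: I1.
- move=> u w; rewrite !in_setU1.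
  case: (eqVneq u v) => [->|Huv] /=; case: (eqVneq w v) => [->|Hwv] /=.
  + by move=> _ _.
  + by move=> _ Hw _; apply: Hz.
  + move=> Hu _ _; have [H1 H2] := Hz u Hu; split.
    * by unfold nz; rewrite cross_anti.
    * by rewrite dot_comm Hsym.
  + by move=> Hu Hw; apply: I2.
Qed.

Lemma rep_set (V : finType) (e : rel V) : simple_graph e -> acyclic_graph e ->
  forall n (S : {set V}), #|S| = n -> exists phi, Inv e S phi.
Proof.
move=> He Hac; have [Hsym Hirr] := He.
elim=> [|n IH] S HS.
- exists (fun _ => V3 1 0 0); split => [v|u w]; by rewrite (cards0_eq HS) inE.
- have HS0 : S != set0 by apply/negP => /eqP E; rewrite E cards0 in HS.
  have [v HvS Hleaf] := leaf_exists He Hac HS0.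
  set S' := S :\ v.
  have HS' : #|S'| = n by move: HS; rewrite (cardsD1 v) HvS => -[].
  have [phi Hphi] := IH S' HS'.
  have HvS' : v \notin S' by rewrite /S' in_setD1 eqxx.
  have [I1 I2] := Hphi.
  suff [x [Hx Hz]] : exists x, nz x /\
     (forall z, z \in S' -> nz (cross x (phi z)) /\ (dot x (phi z) = 0%R <-> e v z)).
    have := extend He HvS' Hphi Hx Hz.
    by rewrite /S' setD1K //; eexists; eauto.
  case: (classic (exists u, u \in S' /\ e v u)) => [[u [HuS' Hvu]]|Hno].
  + have HuS : u \in S by move: HuS'; rewrite in_setD1 => /andP[].
    have [x [Hx [Hxa HW]]] := core (phi u) (List.map phi (enum (S' :\ u))) (I1 u HuS')
      ltac:(move=> w /In_map_enum [z [Hz ->]];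
            move: Hz; rewrite in_setD1 => /andP[Hzu HzS'];
            split; [exact: I1 | exact: (proj1 (I2 z u HzS' HuS' Hzu))]).
    exists x; split => // z HzS'.
    case: (eqVneq z u) => [->|Hzu].
    * split; last by split.
      by apply: lag_perp => //; apply: I1.
    * have Hin : In (phi z) (List.map phi (enum (S' :\ u))).
        by apply/In_map_enum; exists z; rewrite in_setD1 Hzu HzS'.
      have [H1 H2] := HW (phi z) Hin.
      split => //; split => // Hvz; exfalso.
      have HzS : z \in S by move: HzS'; rewrite in_setD1 => /andP[].
      by move: Hzu; rewrite (Hleaf z u HzS HuS Hvz Hvu) eqxx.
  + have [a [Ha HaW]] := lemA (List.map phi (enum S'))
      ltac:(move=> w /In_map_enum [z [Hz ->]]; exact: I1).
    have [x [Hx [_ HW]]] := core a (List.map phi (enum S')) Ha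
      ltac:(move=> w Hw; split; [move: Hw => /In_map_enum [z [Hz ->]]; exact: I1|];
            unfold nz; rewrite cross_anti; exact: HaW).
    exists x; split => // z HzS'.
    have Hin : In (phi z) (List.map phi (enum S')) by apply/In_map_enum; exists z.
    have [H1 H2] := HW (phi z) Hin.
    split => //; split => // Hvz; exfalso; apply: Hno; by exists z.
Qed.

Open Scope ring_scope.

Definition row3 (x : vec3) : 'rV[R]_3 :=
  \row_(i < 3) (if (i : nat) == 0%N then c1 x else if (i : nat) == 1%N then c2 x else c3 x).

Lemma dotR3 (x y : vec3) : dotR (row3 x) (row3 y) = dot x y.
Proof.
rewrite /dotR !big_ord_recr big_ord0 /= !mxE /= GRing.add0r. by [].
Qed.

Lemma row3_nz x : nz x -> row3 x != 0.
Proof.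
move=> Hx; apply/eqP => E; apply: Hx; apply: nrm0'.
- by have := congr1 (fun M : 'rV[R]_3 => M 0 0) E; rewrite !mxE.
- by have := congr1 (fun M : 'rV[R]_3 => M 0 (inord 1)) E; rewrite !mxE inordK.
- by have := congr1 (fun M : 'rV[R]_3 => M 0 (inord 2)) E; rewrite !mxE inordK.
Qed.

Lemma rep3 (V : finType) (e : rel V) : simple_graph e -> acyclic_graph e ->
  has_orth_rep (compl e) 3.
Proof.
move=> He Hac.
have [phi [I1 I2]] := rep_set He Hac (erefl #|[set: V]|).
exists (fun v => row3 (phi v)); split.
- by move=> v; apply: row3_nz; apply: I1; rewrite inE.
- move=> u v Huv; rewrite dotR3 /compl /= Huv /= negbK.
  have [_ Hiff] := I2 u v (in_setT u) (in_setT v) Huv.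
  by apply/idP/idP => [/eqP/Hiff //| /Hiff/eqP //].
Qed.

Lemma closure2 (V : finType) (e : rel V) (psi : V -> vec2) : simple_graph e ->
  connected_graph e -> (forall v, nz2 (psi v)) ->
  (forall x y, x != y -> (dot2 (psi x) (psi y) = 0 <-> e x y)) ->
  forall u v, e u v -> forall w, dot2 (psi w) (psi u) = 0 \/ dot2 (psi w) (psi v) = 0.
Proof.
move=> [Hsym Hirr] Hcon Hnz Hrel u v Huv.
have Huv' : u != v by apply/eqP => E; rewrite E Hirr in Huv.
have Duv : dot2 (psi u) (psi v) = 0 by apply/Hrel.
have Dvu : dot2 (psi v) (psi u) = 0 by rewrite dot2_comm.
have step : forall x y, e x y -> dot2 (psi x) (psi u) = 0 \/ dot2 (psi x) (psi v) = 0 ->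
    dot2 (psi y) (psi u) = 0 \/ dot2 (psi y) (psi v) = 0.
  move=> x y Hxy Hx.
  have Hxy' : x != y by apply/eqP => E; rewrite E Hirr in Hxy.
  have Dxy : dot2 (psi x) (psi y) = 0 by apply/Hrel.
  case: Hx => Hx.
  - right; exact: (L2 _ _ _ _ (Hnz x) (Hnz u) Hx Dxy Duv).
  - left; exact: (L2 _ _ _ _ (Hnz x) (Hnz v) Hx Dxy Dvu).
have gen : forall s x, path e x s -> dot2 (psi x) (psi u) = 0 \/ dot2 (psi x) (psi v) = 0 ->
    dot2 (psi (last x s)) (psi u) = 0 \/ dot2 (psi (last x s)) (psi v) = 0.
  elim=> [|y s IH] x //= /andP[Hxy Hp] Hx.
  exact: (IH y Hp (step x y Hxy Hx)).
move=> w.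
have /connectP [s Hs ->] := Hcon u w.
by apply: gen => //; right.
Qed.

Lemma nz2_self (V : finType) (psi : V -> vec2) (Hnz : forall v, nz2 (psi v)) w :
  dot2 (psi w) (psi w) = 0 -> False.
Proof. exact: Hnz. Qed.

Lemma center2 (V : finType) (e : rel V) (psi : V -> vec2) : simple_graph e ->
  connected_graph e -> (forall v, nz2 (psi v)) ->
  (forall x y, x != y -> (dot2 (psi x) (psi y) = 0 <-> e x y)) ->
  forall u v, e u v -> (forall w, dot2 (psi w) (psi v) = 0 -> w = u) -> is_star e.
Proof.
move=> He Hcon Hnz Hrel u v Huv Hc.
have [Hsym Hirr] := He.
have Hcl := closure2 He Hcon Hnz Hrel Huv.
have Qw : forall w, w != u -> dot2 (psi w) (psi u) = 0.
  move=> w Hw; case: (Hcl w) => // H; by move: Hw; rewrite (Hc w H) eqxx.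
exists u => x y.
case: (eqVneq x y) => [->|Hxy]; first by rewrite Hirr.
rewrite /=.
case: (eqVneq x u) => [Ex|Hxu]; case: (eqVneq y u) => [Ey|Hyu] /=.
- by move: Hxy; rewrite Ex Ey eqxx.
- subst x; apply/Hrel => //; by rewrite dot2_comm; apply: Qw.
- subst y; apply/Hrel => //; by apply: Qw.
- apply/negP => /(Hrel _ _ Hxy) Dxy.
  refine (@nz2_self _ _ Hnz y _).
  apply: (L2 _ _ _ _ (Hnz u) (Hnz x)) => //; by rewrite dot2_comm; apply: Qw.
Qed.

Lemma star_of_2D (V : finType) (e : rel V) (psi : V -> vec2) : simple_graph e ->
  acyclic_graph e -> connected_graph e -> (forall v, nz2 (psi v)) ->
  (forall x y, x != y -> (dot2 (psi x) (psi y) = 0 <-> e x y)) ->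
  forall u v, e u v -> is_star e.
Proof.
move=> He Hac Hcon Hnz Hrel u v Huv.
have [Hsym Hirr] := He.
case: (classic (forall w, dot2 (psi w) (psi v) = 0 -> w = u)) => [H|Hp].
  exact: (center2 He Hcon Hnz Hrel Huv H).
have Hvu : e v u by rewrite Hsym.
case: (classic (forall w, dot2 (psi w) (psi u) = 0 -> w = v)) => [H|Hq].
  exact: (center2 He Hcon Hnz Hrel Hvu H).
exfalso.
have [p [Hp1 Hp2]] : exists p, dot2 (psi p) (psi v) = 0 /\ p <> u.
  apply: NNPP => Hn; apply: Hp => w Hw; apply: NNPP => Hwu; apply: Hn; by exists w.
have [q [Hq1 Hq2]] : exists q, dot2 (psi q) (psi u) = 0 /\ q <> v.
  apply: NNPP => Hn; apply: Hq => w Hw; apply: NNPP => Hwu; apply: Hn; by exists w.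
have Huv' : u != v by apply/eqP => E; rewrite E Hirr in Huv.
have Duv : dot2 (psi u) (psi v) = 0 by apply/Hrel.
have Dvu : dot2 (psi v) (psi u) = 0 by rewrite dot2_comm.
have Hpv : p != v by apply/eqP => E; subst p; exact: (@nz2_self _ _ Hnz v).
have Hqu : q != u by apply/eqP => E; subst q; exact: (@nz2_self _ _ Hnz u).
have disj : forall w, dot2 (psi w) (psi u) = 0 -> dot2 (psi w) (psi v) = 0 -> False.
  move=> w H1 H2; refine (@nz2_self _ _ Hnz v _).
  exact: (L2 _ _ _ _ (Hnz w) (Hnz u) H1 H2 Duv).
have Hpq : p != q by apply/eqP => E; subst q; exact: (disj p Hq1 Hp1).
have Dpq : dot2 (psi p) (psi q) = 0.
  apply: (L2 _ _ _ _ (Hnz v) (Hnz u) Dvu) => //; [by rewrite dot2_comm| by rewrite dot2_comm].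
have Hpu : p != u by apply/eqP.
have Hqv : q != v by apply/eqP.
have := Hac [:: u; v; p; q] isT.
rewrite /ucycleb /= Huv.
have -> : e v p by apply/Hrel; [rewrite eq_sym | rewrite dot2_comm].
have -> : e p q by apply/Hrel.
have -> : e q u by apply/Hrel.
have E1 : (u == v) = false by apply/negbTE.
have E2 : (u == p) = false by rewrite eq_sym; apply/negbTE.
have E3 : (u == q) = false by rewrite eq_sym; apply/negbTE.
have E4 : (v == p) = false by rewrite eq_sym; apply/negbTE.
have E5 : (v == q) = false by rewrite eq_sym; apply/negbTE.
have E6 : (p == q) = false by apply/negbTE.
by rewrite !inE E1 E2 E3 E4 E5 E6.
Qed.

Lemma edge_exists (V : finType) (e : rel V) : connected_graph e -> (1 < #|V|)%N ->
  exists u v, e u v.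
Proof.
move=> Hcon HV; apply: NNPP => Hn.
suff : (#|V| <= 1)%N by rewrite leqNgt HV.
apply/fintype_le1P => x y.
have /connectP [[|z s] Hs ->] := Hcon x y => //=.
move: Hs => /= /andP[Hxz _]; exfalso; apply: Hn; by exists x, z.
Qed.

Lemma low2 (V : finType) (e : rel V) : simple_graph e -> (exists u v, e u v) ->
  forall d, has_orth_rep (compl e) d -> (2 <= d)%N.
Proof.
move=> [Hsym Hirr] [u [v Huv]] [|[|d]] [phi [Hnz Hrel]] //.
- by move: (Hnz u); rewrite thinmx0 eqxx.
- have Huv' : u != v by apply/eqP => E; rewrite E Hirr in Huv.
  move: (Hrel u v Huv'); rewrite /compl /= Huv' Huv /= /dotR big_ord1.
  rewrite GRing.mulf_eq0 => /orP[] /eqP E.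
  + exfalso; move: (Hnz u) => /eqP; apply; apply/matrixP => i j; by rewrite !ord1 mxE.
  + exfalso; move: (Hnz v) => /eqP; apply; apply/matrixP => i j; by rewrite !ord1 mxE.
Qed.

Definition ps2 (x : 'rV[R]_2) : vec2 := V2 (x 0 0) (x 0 1).

Lemma dotR2 (x y : 'rV[R]_2) : dotR x y = dot2 (ps2 x) (ps2 y).
Proof.
rewrite /dotR !big_ord_recr big_ord0 /= GRing.add0r.
have -> : widen_ord (leqnSn 1) ord_max = 0 :> 'I_2 by apply/val_inj.
have -> : ord_max = 1 :> 'I_2 by apply/val_inj.
by [].
Qed.

Lemma ps2_nz (x : 'rV[R]_2) : x != 0 -> nz2 (ps2 x).
Proof.
move=> Hx; apply: nz2_of => -[H1 H2]; move: Hx => /eqP; apply.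
apply/matrixP => i j; rewrite !ord1 mxE.
case: j => [[|[|j]] Hj].
- by have -> : Ordinal Hj = 0 by apply/val_inj.
- by have -> : Ordinal Hj = 1 by apply/val_inj.
- by [].
Qed.

Definition row2 (a b : R) : 'rV[R]_2 := \row_(i < 2) (if (i : nat) == 0%N then a else b).

Lemma dot_row2 a b c d : dotR (row2 a b) (row2 c d) = a * c + b * d.
Proof. by rewrite /dotR !big_ord_recr big_ord0 /= !mxE /= GRing.add0r. Qed.

Lemma row2_nz a b : (a != 0) || (b != 0) -> row2 a b != 0.
Proof.
move=> H; apply/eqP => E; move: H.
have := congr1 (fun M : 'rV[R]_2 => M 0 0) E; rewrite !mxE /= => ->.
have := congr1 (fun M : 'rV[R]_2 => M 0 1) E; rewrite !mxE /= => ->.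
by rewrite eqxx.
Qed.

Theorem proposition4p1 (V : finType) (e : rel V) (n : nat) :
  simple_graph e -> #|V| = n -> (2 <= n)%N -> is_tree e ->
  (is_star e -> mvr_eq (compl e) 2) /\ (~ is_star e -> mvr_eq (compl e) 3).
Proof.
move=> He Hn H2 [Hcon Hac].
have [Hsym Hirr] := He.
have Hedge : exists u v, e u v by apply: edge_exists => //; rewrite Hn.
have Hlow := low2 He Hedge.
split.
- move=> [c Hc]; split => //.
  exists (fun w => if w == c then row2 1 0 else row2 0 1); split.
  + by move=> w; case: (w == c); apply: row2_nz; rewrite ?eqxx ?GRing.oner_eq0 ?orbT.
  + move=> u v Huv; rewrite /compl /= Huv /= negbK Hc Huv /=.
    case: (eqVneq u c) => [Euc|Huc]; case: (eqVneq v c) => [Evc|Hvc] /=;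
      rewrite dot_row2.
    * by move: Huv; rewrite Evc Euc eqxx.
    * by rewrite GRing.mulr0 GRing.mul0r GRing.addr0 eqxx.
    * by rewrite GRing.mulr0 GRing.mul0r GRing.addr0 eqxx.
    * by rewrite GRing.mulr0 GRing.mul1r GRing.add0r GRing.oner_eq0.
- move=> Hns; split; first exact: rep3.
  move=> [|[|[|d]]] Hd //; try by have := Hlow _ Hd.
  exfalso; apply: Hns.
  have [phi [Hnz Hrel]] := Hd.
  have [u [v Huv]] := Hedge.
  apply: (star_of_2D (psi := fun w => ps2 (phi w)) He Hac Hcon _ _ Huv).
  + by move=> w; apply: ps2_nz.
  + move=> x y Hxy; have := Hrel x y Hxy.
    rewrite /compl /= Hxy /= negbK dotR2 => <-.
    by split => [->|/eqP //]; rewrite eqxx.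
Qed.
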